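(* Let $X$ be a real Banach space and $p:X\to\mathbb{R}$ be convex. Suppose there exist $x\in X$ and $\xi\ge0$ such that $|p(u)-p(x)|\le\xi\|u-x\|$ for all $u\in X$. Then $p$ is Lipschitz continuous on $X$ with constant $\xi$, and for any $u\in X$ and any $x^*\in\partial p(u)$ it holds $\|x^*\|\le\xi$.
   Context: For convex $p$, $\partial p(u):=\{x^*\in X^*\mid \langle x^*,v-u\rangle\le p(v)-p(u)\ \forall v\in X\}$. *)

(* Defs.v *)
From Stdlib Require Import Reals Lra.
Open Scope R_scope.

Record NormedSpace := {
  ns_car :> Type;
  ns_zero : ns_car;
  ns_add : ns_car -> ns_car -> ns_car;
  ns_opp : ns_car -> ns_car;
  ns_scal : R -> ns_car -> ns_car;
  ns_norm : ns_car -> R;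
  ns_addA : forall x y z, ns_add x (ns_add y z) = ns_add (ns_add x y) z;
  ns_addC : forall x y, ns_add x y = ns_add y x;
  ns_add0 : forall x, ns_add x ns_zero = x;
  ns_addN : forall x, ns_add x (ns_opp x) = ns_zero;
  ns_scalA : forall a b x, ns_scal a (ns_scal b x) = ns_scal (a * b) x;
  ns_scal1 : forall x, ns_scal 1 x = x;
  ns_scalDr : forall a x y, ns_scal a (ns_add x y) = ns_add (ns_scal a x) (ns_scal a y);
  ns_scalDl : forall a b x, ns_scal (a + b) x = ns_add (ns_scal a x) (ns_scal b x);
  ns_norm_ge0 : forall x, 0 <= ns_norm x;
  ns_norm_eq0 : forall x, ns_norm x = 0 -> x = ns_zero;
  ns_normZ : forall a x, ns_norm (ns_scal a x) = Rabs a * ns_norm x;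
  ns_normD : forall x y, ns_norm (ns_add x y) <= ns_norm x + ns_norm y
}.

Arguments ns_zero {_}.
Arguments ns_add {_}.
Arguments ns_opp {_}.
Arguments ns_scal {_}.
Arguments ns_norm {_}.

Definition ns_sub {X : NormedSpace} (x y : X) : X := ns_add x (ns_opp y).

Definition complete (X : NormedSpace) : Prop :=
  forall s : nat -> X,
    (forall eps, 0 < eps -> exists N, forall m n, (N <= m)%nat -> (N <= n)%nat ->
        ns_norm (ns_sub (s m) (s n)) < eps) ->
    exists l : X, forall eps, 0 < eps -> exists N, forall n, (N <= n)%nat ->
        ns_norm (ns_sub (s n) l) < eps.

Record BanachSpace := {
  bs_ns :> NormedSpace;
  bs_complete : complete bs_ns
}.

Definition convex {X : NormedSpace} (p : X -> R) : Prop :=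
  forall (x y : X) (t : R), 0 <= t <= 1 ->
    p (ns_add (ns_scal t x) (ns_scal (1 - t) y)) <= t * p x + (1 - t) * p y.

Definition lipschitz {X : NormedSpace} (p : X -> R) (L : R) : Prop :=
  forall u v : X, Rabs (p u - p v) <= L * ns_norm (ns_sub u v).

Record dual (X : NormedSpace) := {
  dfun :> X -> R;
  dfun_add : forall x y, dfun (ns_add x y) = dfun x + dfun y;
  dfun_scal : forall a x, dfun (ns_scal a x) = a * dfun x;
  dfun_bounded : exists M, forall x, Rabs (dfun x) <= M * ns_norm x
}.
Arguments dfun {X}.

Definition dual_norm_set {X : NormedSpace} (f : dual X) (r : R) : Prop :=
  exists v : X, ns_norm v <= 1 /\ r = Rabs (f v).

Lemma norm_zero (X : NormedSpace) : ns_norm (@ns_zero X) = 0.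
Proof.
  assert (H : (@ns_zero X) = ns_scal 0 ns_zero).
  { pose (z := ns_scal 0 (@ns_zero X)); change (ns_zero = z).
    assert (Hz : z = ns_add z z).
    { unfold z. rewrite <- ns_scalDl. f_equal. ring. }
    rewrite <- (ns_addN X z). rewrite Hz at 1.
    rewrite <- ns_addA, ns_addN, ns_add0. reflexivity. }
  rewrite H, ns_normZ, Rabs_R0. ring.
Qed.

Lemma dual_norm_set_bound {X : NormedSpace} (f : dual X) : bound (dual_norm_set f).
Proof.
  destruct (dfun_bounded X f) as [M HM].
  exists (Rmax M 0). intros r [v [Hv ->]].
  specialize (HM v). pose proof (ns_norm_ge0 X v).
  destruct (Rle_dec 0 M).
  - rewrite Rmax_left by lra. apply Rle_trans with (M * ns_norm v); [exact HM|].
    rewrite <- (Rmult_1_r M) at 2. apply Rmult_le_compat_l; lra.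
  - rewrite Rmax_right by lra. apply Rle_trans with (M * ns_norm v); [exact HM|].
    assert (M * ns_norm v <= 0) by nra. lra.
Qed.

Lemma dual_norm_set_ne {X : NormedSpace} (f : dual X) : exists r, dual_norm_set f r.
Proof.
  exists (Rabs (f ns_zero)). exists ns_zero. split; [rewrite norm_zero; lra | reflexivity].
Qed.

Definition dual_norm {X : NormedSpace} (f : dual X) : R :=
  proj1_sig (completeness (dual_norm_set f) (dual_norm_set_bound f) (dual_norm_set_ne f)).

Definition subdiff {X : NormedSpace} (p : X -> R) (u : X) (xs : dual X) : Prop :=
  forall v : X, xs (ns_sub v u) <= p v - p u.

(* Main.v *)
Require Import Defs.
From Stdlib Require Import Reals Lra.
Open Scope R_scope.

Section S.
Variable X : NormedSpace.

Lemma scal0 (x : X) : ns_scal 0 x = ns_zero.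
Proof.
  pose (z := ns_scal 0 x).
  assert (Hz : z = ns_add z z).
  { unfold z. rewrite <- ns_scalDl. f_equal. ring. }
  change (z = ns_zero).
  rewrite <- (ns_addN X z). rewrite Hz at 2.
  rewrite <- ns_addA, ns_addN, ns_add0. reflexivity.
Qed.

Lemma opp_scal (x : X) : ns_opp x = ns_scal (-1) x.
Proof.
  rewrite <- (ns_add0 X (ns_scal (-1) x)).
  rewrite <- (ns_addN X x), ns_addA.
  replace (ns_add (ns_scal (-1) x) x) with (ns_add (ns_scal (-1) x) (ns_scal 1 x))
    by (rewrite ns_scal1; reflexivity).
  rewrite <- ns_scalDl.
  replace (-1 + 1) with 0 by ring. rewrite scal0, ns_addC, ns_add0.
  reflexivity.
Qed.

Lemma sub_add (u w : X) : ns_sub (ns_add u w) u = w.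
Proof.
  unfold ns_sub. rewrite (ns_addC X u w), <- ns_addA, ns_addN, ns_add0.
  reflexivity.
Qed.

Lemma sub_swap (u v : X) : ns_norm (ns_sub v u) = ns_norm (ns_sub u v).
Proof.
  assert (E : ns_sub v u = ns_scal (-1) (ns_sub u v)).
  { unfold ns_sub. rewrite !opp_scal, ns_scalDr, ns_scalA.
    replace (-1 * -1) with 1 by ring. rewrite ns_scal1, ns_addC. reflexivity. }
  rewrite E, ns_normZ. replace (Rabs (-1)) with 1
    by (rewrite Rabs_left by lra; ring). ring.
Qed.

Lemma vec_id (u v : X) (t : R) : t <> 0 ->
  ns_add (ns_scal (1/t) (ns_add u (ns_scal t (ns_sub v u)))) (ns_scal (1 - 1/t) u) = v.
Proof.
  intros Ht. rewrite ns_scalDr, ns_scalA.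
  replace (1 / t * t) with 1 by (field; exact Ht). rewrite ns_scal1.
  unfold ns_sub. rewrite opp_scal.
  rewrite (ns_addC X v), ns_addA.
  rewrite <- ns_scalDl.
  rewrite <- ns_addA. rewrite (ns_addC X v), ns_addA, <- ns_scalDl.
  replace (1 / t + -1 + (1 - 1 / t)) with 0 by (field; exact Ht).
  rewrite scal0, ns_addC, ns_add0. reflexivity.
Qed.

Lemma sub_shift (u x w : X) : ns_sub (ns_add u w) x = ns_add (ns_sub u x) w.
Proof.
  unfold ns_sub. rewrite <- !ns_addA. f_equal. apply ns_addC.
Qed.

Lemma arch (a C : R) : 0 <= C -> (forall t, 1 <= t -> t * a <= C) -> a <= 0.
Proof.
  intros HC H. destruct (Rle_dec a 0) as [|Hn]; [assumption|].
  assert (Ha : 0 < a) by lra.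
  specialize (H (C / a + 1)).
  assert (0 <= C / a) by (unfold Rdiv; apply Rmult_le_pos; [lra|apply Rlt_le, Rinv_0_lt_compat; lra]).
  assert (E : (C / a + 1) * a = C + a) by (field; lra).
  rewrite E in H. lra.
Qed.

Lemma key (p : X -> R) (hp : convex p) (x : X) (xi : R) (hxi : 0 <= xi)
  (hloc : forall u : X, Rabs (p u - p x) <= xi * ns_norm (ns_sub u x)) :
  forall u v, p v - p u <= xi * ns_norm (ns_sub v u).
Proof.
  intros u v.
  set (d := ns_sub v u).
  set (N := ns_norm (ns_sub u x)).
  assert (HN : 0 <= N) by apply ns_norm_ge0.
  assert (Hd : 0 <= ns_norm d) by apply ns_norm_ge0.
  enough (p v - p u - xi * ns_norm d <= 0) by lra.
  apply (arch _ (2 * xi * N)); [nra|].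
  intros t Ht.
  set (w := ns_add u (ns_scal t d)).
  assert (Hc := hp w u (1/t)).
  assert (Hit : 0 <= 1/t <= 1).
  { split. apply Rlt_le, Rdiv_lt_0_compat; lra.
    unfold Rdiv. rewrite Rmult_1_l. rewrite <- Rinv_1. apply Rinv_le_contravar; lra. }
  specialize (Hc Hit). unfold w, d in Hc. rewrite vec_id in Hc by lra.
  fold d in Hc. fold w in Hc.
  assert (Hm : t * p v <= p w + (t - 1) * p u).
  { apply Rmult_le_compat_l with (r := t) in Hc; [|lra].
    replace (t * (1 / t * p w + (1 - 1 / t) * p u)) with (p w + (t - 1) * p u) in Hc
      by (field; lra). exact Hc. }
  assert (Hw := hloc w). assert (Hu := hloc u).
  assert (Hnw : ns_norm (ns_sub w x) <= N + t * ns_norm d).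
  { unfold w. rewrite sub_shift. eapply Rle_trans; [apply ns_normD|].
    rewrite ns_normZ, Rabs_right by lra. unfold N; lra. }
  fold N in Hu.
  pose proof (Rle_abs (p w - p x)). pose proof (Rle_abs (-(p u - p x))). rewrite Rabs_Ropp in H0.
  assert (xi * ns_norm (ns_sub w x) <= xi * (N + t * ns_norm d))
    by (apply Rmult_le_compat_l; lra).
  nra.
Qed.

End S.

Theorem mainTheorem5 (X : BanachSpace) (p : X -> R) (hp : convex p)
  (x : X) (xi : R) (hxi : 0 <= xi)
  (hloc : forall u : X, Rabs (p u - p x) <= xi * ns_norm (ns_sub u x)) :
  lipschitz p xi /\
  (forall (u : X) (xs : dual X), subdiff p u xs -> dual_norm xs <= xi).
Proof.
  pose proof (key X p hp x xi hxi hloc) as K.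
  split.
  - intros u v. apply Rabs_le. split.
    + pose proof (K u v). rewrite sub_swap in H. lra.
    + apply K.
  - intros u xs Hs. unfold dual_norm.
    destruct (completeness _ _ _) as [m [Hub Hm]]. simpl.
    apply Hm. intros r [v [Hv Er]]. rewrite Er.
    assert (H1 := Hs (ns_add u v)). rewrite sub_add in H1.
    assert (H2 := Hs (ns_add u (ns_scal (-1) v))). rewrite sub_add in H2.
    rewrite dfun_scal in H2.
    assert (K1 := K u (ns_add u v)). rewrite sub_add in K1.
    assert (K2 := K u (ns_add u (ns_scal (-1) v))). rewrite sub_add in K2.
    rewrite ns_normZ in K2. replace (Rabs (-1)) with 1 in K2
      by (rewrite Rabs_left by lra; ring).
    assert (xi * ns_norm v <= xi) by (rewrite <- (Rmult_1_r xi) at 2; apply Rmult_le_compat_l; lra).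
    apply Rabs_le. lra.
Qed.
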